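(* Let $L=\mathbb{Z}v$ be a one-dimensional lattice with $v\in\mathbb{R}_{>0}$, and assume $b\ge3v+1$. Then two elements chosen independently and uniformly at random from $L\cap[0,b)$ generate $L$ with probability greater than $\frac{3^3}{\pi^22^3}>\frac13$. *)

(* Defs.v *)
From HB Require Import structures.
From mathcomp Require Import all_boot all_order all_algebra.
From mathcomp Require Import all_classical all_reals all_analysis.
Set Implicit Arguments. Unset Strict Implicit. Unset Printing Implicit Defensive.
Import Order.TTheory GRing.Theory Num.Theory.
Local Open Scope ring_scope.

Definition in_lattice1 (R : realType) (v x : R) : Prop :=
  exists m : int, x = m%:~R * v.

Definition generates_lattice1 (R : realType) (v a c : R) : Prop :=
  forall z : R, in_lattice1 v z <-> exists x y : int, z = x%:~R * a + y%:~R * c.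

Definition n_gen_pairs (R : realType) (v : R) (n : nat) (pts : 'I_n -> R) : nat :=
  \sum_(p : 'I_n * 'I_n) (if `[< generates_lattice1 v (pts p.1) (pts p.2) >] then 1 else 0)%N.

(* Main.v *)
Require Import Defs.
From HB Require Import structures.
From mathcomp Require Import all_boot all_order all_algebra.
From mathcomp Require Import all_classical all_reals all_analysis.
From mathcomp Require Import ring lra zify.
Import Order.TTheory GRing.Theory Num.Theory.
Import numFieldNormedType.Exports.
Lemma multiples M d : 0 < d -> \sum_(1 <= a < M.+1) (d %| a) = M %/ d.
Proof.
move=> d0; elim: M => [|M IH]; first by rewrite big_nil div0n.
by rewrite big_nat_recr //= IH divnS // addnC.
Qed.

Lemma sq_mult M d : 0 < d ->
  \sum_(1 <= a < M.+1) \sum_(1 <= b < M.+1) ((d %| a) * (d %| b)) = (M %/ d) * (M %/ d).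
Proof.
move=> d0.
rewrite -(@multiples M d d0) big_distrl /=; apply: eq_bigr => a _.
by rewrite big_distrr.
Qed.

Definition tt2 (a b d : nat) := (d %| a) * (d %| b).

Lemma pointwise M a b : 1 <= a <= M -> 1 <= b <= M -> 
  ~~ coprime a b <= tt2 a b 2 + tt2 a b 3 + \sum_(2 <= k < M) tt2 a b k.*2.+1.
Proof.
move=> /andP[a1 aM] /andP[b1 bM]; case nc: (coprime a b) => //=.
have g0 : 0 < gcdn a b by rewrite gcdn_gt0 a1.
have g1 : 1 < gcdn a b.
  by move: nc; rewrite /coprime; case: (gcdn a b) g0 => [|[|]].
set p := pdiv (gcdn a b).
have pp : prime p by exact: pdiv_prime.
have pa : p %| a by apply: dvdn_trans (pdiv_dvd _) (dvdn_gcdl _ _).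
have pb : p %| b by apply: dvdn_trans (pdiv_dvd _) (dvdn_gcdr _ _).
have tp : tt2 a b p = 1 by rewrite /tt2 pa pb.
have pM : p <= M by apply: leq_trans aM; apply: dvdn_leq.
have p2 := prime_gt1 pp.
case: (even_prime pp) => [p2e|podd].
  by rewrite -p2e tp -addnA leq_addr.
have [p3|p3] := eqVneq p 3.
  by rewrite -p3 tp addnAC leq_addl.
have pe : p = (p./2).*2.+1 by rewrite -[LHS]odd_double_half podd.
have k2 : 2 <= p./2.
  move: p3 p2; rewrite pe; case: (p./2) => [|[|]] //.
have kM : p./2 < M by move: pM; rewrite pe; rewrite -addn1 -muln2; lia.
rewrite (bigD1_seq p./2) /=; last by apply: iota_uniq.
  by rewrite -pe tp addnC -addnA leq_addr.
by rewrite mem_index_iota k2 kM.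
Qed.

Lemma Ebound M :
  \sum_(1 <= a < M.+1) \sum_(1 <= b < M.+1) ~~ coprime a b <=
  (M %/ 2) * (M %/ 2) + (M %/ 3) * (M %/ 3) +
  \sum_(2 <= k < M) (M %/ k.*2.+1) * (M %/ k.*2.+1).
Proof.
apply: (@leq_trans (\sum_(1 <= a < M.+1) \sum_(1 <= b < M.+1)
    (tt2 a b 2 + tt2 a b 3 + \sum_(2 <= k < M) tt2 a b k.*2.+1))).
  rewrite big_seq [X in _ <= X]big_seq; apply: leq_sum => a; rewrite mem_index_iota => ha.
  rewrite big_seq [X in _ <= X]big_seq; apply: leq_sum => b; rewrite mem_index_iota => hb.
  by apply: pointwise; rewrite -ltnS.
have -> : \sum_(2 <= k < M) (M %/ k.*2.+1) * (M %/ k.*2.+1) =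
   \sum_(1 <= a < M.+1) \sum_(1 <= b < M.+1) \sum_(2 <= k < M) tt2 a b k.*2.+1.
  under eq_bigr => k _ do rewrite -sq_mult //.
  rewrite exchange_big; apply: eq_bigr => a _; rewrite exchange_big //.
rewrite -!sq_mult //.
rewrite -!big_split /=; apply: eq_leq; apply: eq_bigr => a _.
by rewrite -!big_split.
Qed.

Lemma pairsum N (F : nat -> nat -> nat) :
  \sum_(p : 'I_N * 'I_N) F p.1 p.2 = \sum_(0 <= a < N) \sum_(0 <= b < N) F a b.
Proof.
rewrite big_mkord; under [RHS]eq_bigr do rewrite big_mkord.
exact: (esym (pair_bigA _ (fun (a b : 'I_N) => F a b))).
Qed.

Lemma Clb M : 0 < M ->
  2 + \sum_(1 <= a < M.+1) \sum_(1 <= b < M.+1) coprime a b <=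
  \sum_(p : 'I_M.+1 * 'I_M.+1) coprime p.1 p.2.
Proof.
move=> M0.
rewrite (pairsum _ (fun a b => (coprime a b : nat))).
have -> : \sum_(0 <= a < M.+1) \sum_(0 <= b < M.+1) (coprime a b : nat) =
   (\sum_(0 <= b < M.+1) (coprime 0 b : nat)) + (\sum_(1 <= a < M.+1) (coprime a 0 : nat))
   + \sum_(1 <= a < M.+1) \sum_(1 <= b < M.+1) (coprime a b : nat).
  rewrite big_ltn // -addnA -big_split; congr (_ + _); apply: eq_bigr => a _.
  by rewrite big_ltn.
have h1 : 1 <= \sum_(0 <= b < M.+1) (coprime 0 b : nat).
  by rewrite big_ltn // big_ltn //.
have h2 : 1 <= \sum_(1 <= a < M.+1) (coprime a 0 : nat).
  by rewrite big_ltn // coprime1n.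
lia.
Qed.

Lemma DE M : \sum_(1 <= a < M.+1) \sum_(1 <= b < M.+1) coprime a b +
  \sum_(1 <= a < M.+1) \sum_(1 <= b < M.+1) ~~ coprime a b = M * M.
Proof.
rewrite -big_split /=.
rewrite (eq_bigr (fun _ => M)); last first.
  move=> a _; rewrite -big_split /= (eq_bigr (fun _ => 1)).
    by rewrite sum_nat_const_nat subSS subn0 muln1.
  by move=> b _; case: coprime.
by rewrite sum_nat_const_nat subSS subn0.
Qed.

Local Open Scope ring_scope.

Section Real.
Variable R : realFieldType.

Lemma divsq (M d : nat) : (0 < d)%N ->
  ((M %/ d) * (M %/ d))%:R <= (M%:R : R) ^+ 2 / (d%:R) ^+ 2.
Proof.
move=> d0.
have h := leq_divM M d.
have hd : 0 < d%:R :> R by rewrite ltr0n.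
have hq : (M %/ d)%:R * d%:R <= M%:R :> R by rewrite -natrM ler_nat.
have hq0 : 0 <= (M %/ d)%:R :> R by [].
have hq' : (M %/ d)%:R <= M%:R / d%:R :> R by rewrite ler_pdivlMr.
rewrite natrM -expr_div_n expr2.
apply: ler_pM => //.
Qed.

Lemma oddsum K : \sum_(2 <= k < K.+2) (1 / ((k.*2.+1)%:R ^+ 2) : R) <= 1/8 - 1/(4 * (K.+2)%:R).
Proof.
elim: K => [|K IH]; first by rewrite big_nil; lra.
rewrite big_nat_recr //=.
have -> : (K.+2).*2.+1%:R = 2 * (K.+2)%:R + 1 :> R by rewrite -muln2 -addn1 natrD natrM mulrC.
have -> : (K.+3)%:R = (K.+2)%:R + 1 :> R by rewrite -addn1 natrD.
have hx : 2 <= (K.+2)%:R :> R by rewrite (ler_nat R 2).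
set x := ((K.+2)%:R : R) in IH hx *; clearbody x.
have : 1 / (2 * x + 1) ^+ 2 <= 1 / (4 * x) - 1 / (4 * (x + 1)).
  have -> : 1 / (4 * x) - 1 / (4 * (x + 1)) = 1 / (4 * x * (x + 1)).
    by field; apply/andP; split; lra.
  rewrite !div1r lef_pV2 ?posrE ?exprn_gt0; try nra.
lra.
Qed.

Lemma oddsum' M : \sum_(2 <= k < M) (1 / ((k.*2.+1)%:R ^+ 2) : R) <= 1/8.
Proof.
case: M => [|[|K]]; [by rewrite big_geq //; lra | by rewrite big_geq //; lra |].
apply: le_trans (oddsum K) _.
rewrite lerBlDr lerDl divr_ge0 // mulr_ge0 //.
Qed.

Lemma count_main M : (0 < M)%N ->
  3 * ((M.+1)%:R) ^+ 2 < 8 * (\sum_(p : 'I_M.+1 * 'I_M.+1) coprime p.1 p.2)%:R :> R.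
Proof.
move=> M0.
have h1 := @Clb M M0.
have h2 := DE M.
have h3 := Ebound M.
set C := \sum_(p : 'I_M.+1 * 'I_M.+1) _ in h1 *.
set D := \sum_(1 <= a < M.+1) \sum_(1 <= b < M.+1) (coprime a b : nat) in h1 h2.
set E := \sum_(1 <= a < M.+1) \sum_(1 <= b < M.+1) (~~ coprime a b : nat) in h2 h3.
set S := \sum_(2 <= k < M) _ in h3.
have r1 : 2 + D%:R <= C%:R :> R by rewrite -natrD ler_nat.
have r2 : D%:R + E%:R = M%:R ^+ 2 :> R by rewrite -natrD h2 natrM expr2.
have r3 : E%:R <= ((M %/ 2) * (M %/ 2))%:R + ((M %/ 3) * (M %/ 3))%:R + S%:R :> R.
  by rewrite -!natrD ler_nat.
have r4 := @divsq M 2 isT.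
have r5 := @divsq M 3 isT.
have r6 : S%:R <= (M%:R : R) ^+ 2 / 8.
  rewrite /S natr_sum.
  apply: (@le_trans _ _ (\sum_(2 <= k < M) (M%:R : R) ^+ 2 * (1 / ((k.*2.+1)%:R ^+ 2)))).
    apply: ler_sum => k _; rewrite mulrA mulr1; exact: divsq.
  rewrite -mulr_sumr -[X in _ <= X]mulr1 -mulrA.
  apply: ler_wpM2l; first exact: sqr_ge0.
  have := oddsum' M; lra.
have hm : 1 <= M%:R :> R by rewrite (ler_nat R 1).
move: r4 r5; rewrite [(2%:R : R)]/= [(3%:R : R)]/= => r4 r5.
have e2 : (2%:R : R) ^+ 2 = 4 by rewrite expr2 -natrM.
have e3 : (3%:R : R) ^+ 2 = 9 by rewrite expr2 -natrM.
rewrite e2 e3 in r4 r5.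
have e1 : ((M.+1)%:R : R) = M%:R + 1 by rewrite -addn1 natrD.
rewrite e1.
set m := (M%:R : R) in r2 r4 r5 r6 hm *.
clearbody m.
have hsq : 0 <= (m - 27/10) ^+ 2 by apply: sqr_ge0.
rewrite !expr2 in hsq r2 r4 r5 r6 *.
nra.
Qed.
End Real.

Section PI.
Variable R : realType.

Lemma coeff_pair (x : R) m : (1 <= m)%N -> 0 < x -> x ^+ 2 <= 4 ->
  0 < x ^+ m.*2 / (m.*2)`!%:R - x ^+ (m.+1).*2 / ((m.+1).*2)`!%:R.
Proof.
move=> m1 x0 x4.
rewrite doubleS !factS !natrM exprS exprS.
have hf : 0 < ((m.*2)`!)%:R :> R by rewrite ltr0n fact_gt0.
have hx : 0 < x ^+ m.*2 by rewrite exprn_gt0.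
set F := ((m.*2)`!)%:R in hf *. set X := x ^+ m.*2 in hx *.
have h1 : (4 : R) < (m.*2.+2)%:R * (m.*2.+1)%:R.
  rewrite -natrM ltr_nat. rewrite -muln2; nia.
set K := (m.*2.+2)%:R * (m.*2.+1)%:R in h1.
have -> : (m.*2.+2)%:R * ((m.*2.+1)%:R * F) = K * F by rewrite /K mulrA.
have hK : 0 < K by lra.
rewrite -(mulr1 (X / F)) [x * (x * X)]mulrA [x * x * X]mulrC -expr2.
have -> : X * x ^+ 2 / (K * F) = (X / F) * (x ^+ 2 / K).
  by field; rewrite lt0r_neq0 ?lt0r_neq0.
rewrite -mulrBr mulr_gt0 ?divr_gt0 // subr_gt0 ltr_pdivrMr // mul1r.
lra.
Qed.

Lemma cos_lb (x : R) : 0 < x -> x ^+ 2 <= 4 ->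
  \sum_(0 <= i < 4) cos_coeff' x i < cos x.
Proof.
move=> x0 x4.
have h := @cvg_cos_coeff' R x; rewrite -(cvg_lim (@Rhausdorff R) h).
apply: lt_sum_lim_series; [by move/cvgP in h|move=> d].
rewrite /cos_coeff' -!exprnP -signr_odd oddD odd_double /=.
have -> : (-1) ^+ (4 + d.*2.+1) = -1 :> R.
  by rewrite -signr_odd addnS /= oddD odd_double.
rewrite expr0 mul1r mulN1r mulNr addnS.
exact: (@coeff_pair x (4 + d.*2) isT x0 x4).
Qed.

Lemma cos_ub (x : R) : 0 < x -> x ^+ 2 <= 4 ->
  cos x < \sum_(0 <= i < 5) cos_coeff' x i.
Proof.
move=> x0 x4.
have /cvgN h := @cvg_cos_coeff' R x.
rewrite -ltrN2 -(cvg_lim (@Rhausdorff R) h) -sumrN.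
rewrite -seriesN.
apply: lt_sum_lim_series; [by move/cvgP in h; rewrite seriesN|move=> d].
rewrite /cos_coeff' -!exprnP -signr_odd oddD odd_double /=.
have -> : (-1) ^+ (5 + d.*2.+1) = 1 :> R.
  by rewrite -signr_odd addnS /= oddD odd_double.
rewrite expr1 mulN1r mul1r mulNr opprK addnS.
exact: (@coeff_pair x (5 + d.*2) isT x0 x4).
Qed.

End PI.
Section PI2.
Variable R : realType.
Lemma cos32 : 0 < cos (3/2 : R).
Proof.
have h1 : 0 < (3/2 : R) by lra.
have h2 : (3/2 : R) ^+ 2 <= 4 by rewrite expr2; lra.
apply: (le_lt_trans _ (@cos_lb R _ h1 h2)).
rewrite /cos_coeff' !big_nat_recr //= big_nil -!exprnP.
rewrite (_ : 0.*2 = 0)%N // (_ : 1.*2 = 2)%N // (_ : 2.*2 = 4)%N // (_ : 3.*2 = 6)%N //.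
rewrite !factS fact0 !mul1n !natrM !exprS !expr0 !mul1r.
lra.
Qed.

Lemma cos159 : cos (159/100 : R) < 0.
Proof.
have h1 : 0 < (159/100 : R) by lra.
have h2 : (159/100 : R) ^+ 2 <= 4 by rewrite expr2; lra.
apply: (lt_le_trans (@cos_ub R _ h1 h2)).
rewrite /cos_coeff' !big_nat_recr //= big_nil -!exprnP.
rewrite (_ : 0.*2 = 0)%N // (_ : 1.*2 = 2)%N // (_ : 2.*2 = 4)%N // (_ : 3.*2 = 6)%N // (_ : 4.*2 = 8)%N //.
rewrite !factS fact0 !mul1n !natrM !exprS !expr0 !mul1r.
lra.
Qed.

Lemma pi_gt3 : 3 < (pi : R).
Proof.
have hp := @pi_ge2 R.
have : (3/2 : R) < pi / 2.
  rewrite -(@ltr_cos R) ?cos_pihalf ?cos32 //; rewrite in_itv /=; apply/andP; split; lra.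
lra.
Qed.

Lemma pi_lt : (pi : R) < 318/100.
Proof.
have hp := @pi_ge2 R.
have : pi / 2 < (159/100 : R).
  rewrite -(@ltr_cos R) ?cos_pihalf ?cos159 //; rewrite in_itv /=; apply/andP; split; lra.
lra.
Qed.
End PI2.


Lemma count_mainN (R : realFieldType) N : (1 < N)%N ->
  3 * (N%:R) ^+ 2 < 8 * (\sum_(p : 'I_N * 'I_N) coprime p.1 p.2)%:R :> R.
Proof. by case: N => [|M] //; rewrite ltnS => M0; apply: count_main. Qed.

Lemma gen_coprime (R : realType) (v : R) (a c : nat) : coprime a c ->
  generates_lattice1 v (a%:R * v) (c%:R * v).
Proof.
move=> co z; split.
  case=> m ->.
  case: (Bezoutz a c) => u [w huw].
  have hg : gcdz a c = 1 by rewrite /gcdz /= (eqP co).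
  rewrite hg in huw.
  have e1 : (u%:~R * a%:R + w%:~R * c%:R : R) = 1.
    have := congr1 (fun t : int => (t%:~R : R)) huw.
    by rewrite /= intrD !intrM.
  exists (m * u), (m * w).
  rewrite !intrM.
  transitivity (m%:~R * v * (u%:~R * a%:R + w%:~R * c%:R) : R); first by rewrite e1 mulr1.
  ring.
case=> x [y ->].
exists (x * a%:Z + y * c%:Z).
rewrite intrD !intrM /=.
ring.
Qed.

Theorem lemma7p9 (R : realType) (v b : R) (hv : 0 < v) (hb : 3 * v + 1 <= b)
  (n : nat) (pts : 'I_n -> R) (hinj : injective pts)
  (henum : forall x : R, (in_lattice1 v x /\ 0 <= x < b) <-> exists i : 'I_n, x = pts i) :
  (n_gen_pairs v pts)%:R / (n ^ 2)%:R > 3 ^+ 3 / (pi ^+ 2 * 2 ^+ 3) :> R /\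
  3 ^+ 3 / (pi ^+ 2 * 2 ^+ 3) > 1 / 3 :> R.
Proof.
have ex : forall i : 'I_n, exists k : nat, pts i == k%:R * v.
  move=> i; have [[m hm] /andP[h0 hb']] := (henum (pts i)).2 (ex_intro _ i erefl).
  have m0 : 0 <= m.
    by move: h0; rewrite hm pmulr_lge0 // ler0z.
  exists `|m|%N; apply/eqP; by rewrite hm natr_absz ger0_norm.
pose f i := xchoose (ex i).
have hf : forall i, pts i = (f i)%:R * v by move=> i; apply/eqP; exact: (xchooseP (ex i)).
have vn0 : v != 0 by rewrite gt_eqF.
have natv : forall j k : nat, j%:R * v = k%:R * v -> j = k.
  by move=> j k /(mulIf vn0) /eqP; rewrite eqr_nat => /eqP.
have finj : injective f.
  by move=> i j e; apply: hinj; rewrite !hf e.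
have flt : forall i, (f i < n)%N.
  move=> i; rewrite ltnNge; apply/negP => hle.
  have ex2 : forall j : 'I_(f i).+1, exists i', pts i' == (j : nat)%:R * v.
    move=> j; have [H _] := henum ((j : nat)%:R * v).
    have [i' hi'] : exists i' : 'I_n, (j : nat)%:R * v = pts i'.
      apply: H; split; first by exists (j : nat); rewrite -pmulrn.
      apply/andP; split; first by rewrite mulr_ge0 // ltW.
      apply: le_lt_trans (_ : pts i < b).
        rewrite hf ler_pM2r // ler_nat -ltnS; exact: ltn_ord.
      by have [_ /andP[_ ->]] := (henum (pts i)).2 (ex_intro _ i erefl).
    by exists i'; rewrite hi'.
  pose g j := xchoose (ex2 j).
  have ginj : injective g.
    move=> j1 j2 e; apply: val_inj; apply: natv.
    rewrite -(eqP (xchooseP (ex2 j1))) -(eqP (xchooseP (ex2 j2))).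
    exact: (congr1 pts e).
  have := leq_card g ginj; rewrite !card_ord => H.
  by move: (leq_trans H hle); rewrite ltnn.
pose F i := Ordinal (flt i).
have Finj : injective F by move=> i j /(congr1 val) /= /finj.
pose h (p : 'I_n * 'I_n) := (F p.1, F p.2).
have hinjh : injective h.
  by move=> [p1 p2] [q1 q2] [/finj -> /finj ->].
have Cle : (\sum_(p : 'I_n * 'I_n) coprime p.1 p.2 <= n_gen_pairs v pts)%N.
  rewrite (reindex_inj hinjh) /n_gen_pairs; apply: leq_sum => p _ /=.
  case co: (coprime (f p.1) (f p.2)) => //.
  rewrite asboolT //; rewrite !hf; exact: gen_coprime.
have n2 : (1 < n)%N.
  have [i1 hi1] : exists i : 'I_n, v = pts i.
    apply: (henum v).1; split; first by exists 1; rewrite mul1r.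
    apply/andP; split; [exact: ltW | lra].
  have := flt i1; suff -> : f i1 = 1%N by [].
  by apply: natv; rewrite -hf -hi1 mul1r.
have hc := @count_mainN R n n2.
set C := \sum_(p : 'I_n * 'I_n) _ in Cle hc.
have hG : (C%:R : R) <= (n_gen_pairs v pts)%:R by rewrite ler_nat.
set G := ((n_gen_pairs v pts)%:R : R) in hG *.
have p3 := @pi_gt3 R.
have p4 := @pi_lt R.
have hn : (1 : R) < n%:R by rewrite ltr1n.
rewrite natrX.
set m := (n%:R : R) in hc hn *.
have G0 : 0 <= G by rewrite /G.
clearbody G m.
have pi0 : 0 < (pi : R) by lra.
have pi2 : 9 < pi * pi :> R by nra.
have e : 3 ^+ 3 / (pi ^+ 2 * 2 ^+ 3) = 27 / (8 * (pi * pi)) :> R.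
  by rewrite !exprS !expr0 !mulr1; field; lra.
rewrite e.
split.
  rewrite ltr_pdivlMr ?exprn_gt0 ?(lt_trans ltr01) //.
  rewrite mulrAC ltr_pdivrMr; last by nra.
  rewrite !expr2 in hc *.
  nra.
rewrite ltr_pdivlMr; last by nra.
nra.
Qed.
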